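(* There exist absolute constants $c, C > 0$, an infinite set $S$ of positive integers, and for each $n \in S$ a union-closed family $\mathcal{F}_n \subset \mathcal{P}([n])$ with $\mathcal{F}_n \neq \emptyset$, $\mathcal{F}_n \neq \{\emptyset\}$ and $|\mathcal{F}_n| \to \infty$ as $n \to \infty$ in $S$, such that for every $n \in S$, $$c\,\frac{\log_2 \log_2 |\mathcal{F}_n|}{\log_2 |\mathcal{F}_n|} \;\leq\; \mathrm{AOD}(\mathcal{F}_n) \;\leq\; C\,\frac{\log_2 \log_2 |\mathcal{F}_n|}{\log_2 |\mathcal{F}_n|}.$$
   Context: $[n] = \{1,2,\ldots,n\}$. A family $\mathcal{F}$ of subsets of a set $X$ is union-closed if $A \cup B \in \mathcal{F}$ whenever $A, B \in \mathcal{F}$. For a finite nonempty family $\mathcal{F} \subset \mathcal{P}(X)$ and $x \in X$, the abundance of $x$ is $\gamma_x = |\{A \in \mathcal{F} : x \in A\}|/|\mathcal{F}|$. For $\mathcal{F} \neq \emptyset, \{\emptyset\}$, the average overlap density is $$\mathrm{AOD}(\mathcal{F}) = \frac{1}{|\mathcal{F}\setminus\{\emptyset\}|}\sum_{A \in \mathcal{F}\setminus\{\emptyset\}} \frac{1}{|A|}\sum_{x \in A} \gamma_x = \mathbb{E}_{A \in \mathcal{F}\setminus\{\emptyset\}}\,\mathbb{E}_{B \in \mathcal{F}}\left[\frac{|A\cap B|}{|A|}\right],$$ with $A$ and $B$ uniform. *)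

(* Defs.v *)
From mathcomp Require Import all_boot all_order all_algebra.
From mathcomp Require Import reals exp.
Set Implicit Arguments. Unset Strict Implicit. Unset Printing Implicit Defensive.
Import Order.TTheory GRing.Theory Num.Theory.
Local Open Scope ring_scope.

Definition union_closed (T : finType) (F : {set {set T}}) : Prop :=
  forall A B, A \in F -> B \in F -> A :|: B \in F.

Definition abundance (R : realFieldType) (T : finType) (F : {set {set T}}) (x : T) : R :=
  #|[set A in F | x \in A]|%:R / #|F|%:R.

Definition AOD (R : realFieldType) (T : finType) (F : {set {set T}}) : R :=
  (#|F :\ set0|%:R)^-1 *
  \sum_(A in F :\ set0) ((#|A|%:R)^-1 * \sum_(x in A) abundance R F x).

Definition log2 (R : realType) (x : R) : R := ln x / ln 2.

(* Main.v *)
Require Import Defs.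
From mathcomp Require Import all_boot all_order all_algebra.
From mathcomp Require Import reals exp.
From mathcomp Require Import zify ring lra.
Set Implicit Arguments. Unset Strict Implicit. Unset Printing Implicit Defensive.

Lemma card_ord_pred (q : nat) (f : nat -> bool) :
  #|[set y : 'I_q | f y]| = \sum_(0 <= y < q) f y.
Proof.
rewrite -sum1dep_card big_mkcond /= -(big_mkord xpredT (fun y => (f y : nat))).
by apply: eq_bigr => i _; case: (f i).
Qed.

Lemma sum_ge (t q : nat) : t <= q -> \sum_(0 <= y < q) (t <= y) = q - t.
Proof.
move=> tq; rewrite (@big_cat_nat _ _ _ t 0 q _ _ (leq0n t) tq) /=.
rewrite (eq_big_nat _ _ (F2 := fun _ => 0)); last by move=> i /andP[_ h]; rewrite leqNgt h.
rewrite (eq_big_nat _ _ (F2 := fun _ => 1) (m := t) (n := q)); last by move=> i /andP[h _]; rewrite h.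
rewrite !sum_nat_const_nat; lia.
Qed.

Lemma sum_lt (t q : nat) : t <= q -> \sum_(0 <= y < q) (y < t) = t.
Proof.
move=> tq; rewrite (@big_cat_nat _ _ _ t 0 q _ _ (leq0n t) tq) /=.
rewrite (eq_big_nat _ _ (F2 := fun _ => 1)); last by move=> i /andP[_ h]; rewrite h.
rewrite (eq_big_nat _ _ (F2 := fun _ => 0) (m := t) (n := q)); last by move=> i /andP[h _]; rewrite ltnNge h.
rewrite !sum_nat_const_nat; lia.
Qed.

Lemma sum_blocks (B k : nat) (F : nat -> nat) :
  \sum_(0 <= x < k * B) F x = \sum_(0 <= i < k) \sum_(0 <= y < B) F (i * B + y).
Proof.
elim: k => [|k IH]; first by rewrite mul0n !big_geq.
rewrite big_nat_recr //= -IH mulSn addnC.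
rewrite (@big_cat_nat _ _ _ (k * B) 0 (k * B + B) _ _ (leq0n _) (leq_addr B _)) /=; congr (_ + _).
rewrite -{1}(add0n (k * B)) big_addn addKn.
by apply: eq_bigr => i _; rewrite addnC.
Qed.

Lemma bern (a p : nat) : a ^ p.+1 + p.+1 * a ^ p <= a.+1 ^ p.+1.
Proof.
elim: p => [|p IH]; first by rewrite expn1 expn0 expn1 mul1n addn1.
move: IH; rewrite !expnS; set u := a ^ p; set X := a.+1 ^ p; nia.
Qed.

Lemma double_step (b q : nat) : b < q -> 2 * b ^ q <= b.+1 ^ q.
Proof.
case: q => [//|p] bq; have := bern b p.
have : b ^ p.+1 <= p.+1 * b ^ p by rewrite expnS leq_mul2r (ltnW bq) orbT.
lia.
Qed.

Lemma dec_bound (q d : nat) : d <= q -> (q - d) ^ q * 2 ^ d <= q ^ q.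
Proof.
elim: d => [|d IH] dq; first by rewrite subn0 expn0 muln1.
have h := IH (ltnW dq).
have e : q - d = (q - d.+1).+1 by lia.
have := double_step (b := q - d.+1) (q := q); rewrite -e => /(_ ltac:(lia)) h2.
rewrite expnS; nia.
Qed.

Lemma sum_pow2 (q : nat) : \sum_(t < q) 2 ^ t.+1 + 2 = 2 ^ q.+1.
Proof.
elim: q => [|q IH]; first by rewrite big_ord0.
rewrite big_ord_recr /=. set S := \sum_(i < q) _. rewrite -/S in IH. move: IH; rewrite !expnS; lia.
Qed.

Lemma sum_pow_bound (q : nat) : \sum_(t < q) t.+1 ^ q <= 2 * q ^ q.
Proof.
rewrite -(@leq_pmul2r (2 ^ q)) ?expn_gt0 // big_distrl /=.
apply: (@leq_trans (\sum_(t < q) q ^ q * 2 ^ t.+1)).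
  apply: leq_sum => t _.
  have tq := ltn_ord t.
  have := dec_bound (q := q) (d := q - t.+1) ltac:(lia).
  rewrite (_ : q - (q - t.+1) = t.+1); last by lia.
  have -> : 2 ^ q = 2 ^ (q - t.+1) * 2 ^ t.+1 by rewrite -expnD; congr (_ ^ _); lia.
  rewrite mulnA; move=> h; by rewrite leq_mul2r h orbT.
rewrite -big_distrr /= (mulnC 2) -mulnA leq_mul2l; apply/orP; right.
have := sum_pow2 q; rewrite expnS; set S := \sum_(i < q) _; lia.
Qed.

Section Fam.
Variables (q n : nat).
Definition QQ := q * q.
Definition ss j := QQ ^ j - 1.
Definition BB := QQ ^ q.
Definition gn (g : {ffun 'I_q -> 'I_q}) (i : nat) : nat :=
  if insub i is Some i' then nat_of_ord (g i') else 0.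
Definition setg (g : {ffun 'I_q -> 'I_q}) : {set 'I_n} :=
  [set x : 'I_n | x %% BB < ss (gn g (x %/ BB))].
Definition fam : {set {set 'I_n}} := setg @: setT.

Hypothesis hq : 1 < q.
Hypothesis hn : n = q * BB.

Lemma QQ_gt1 : 1 < QQ. Proof. rewrite /QQ; nia. Qed.
Lemma BB_gt0 : 0 < BB. Proof. by rewrite /BB expn_gt0; have := QQ_gt1; lia. Qed.

Lemma ss_le a b : a <= b -> ss a <= ss b.
Proof. move=> ab; rewrite /ss leq_sub2r // leq_pexp2l //; have := QQ_gt1; lia. Qed.

Lemma ss_lt a b : (ss a < ss b) = (a < b).
Proof.
rewrite /ss -(ltn_exp2l a b QQ_gt1).
have h1 : 0 < QQ ^ a by rewrite expn_gt0; have := QQ_gt1; lia.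
have h2 : 0 < QQ ^ b by rewrite expn_gt0; have := QQ_gt1; lia.
apply/idP/idP; lia.
Qed.

Lemma ss0 : ss 0 = 0. Proof. by []. Qed.

Lemma ss_ltBB j : j <= q -> ss j < BB.
Proof.
move=> jq; rewrite /ss /BB.
have h1 : 0 < QQ ^ j by rewrite expn_gt0; have := QQ_gt1; lia.
have : QQ ^ j <= QQ ^ q by rewrite leq_pexp2l //; have := QQ_gt1; lia.
lia.
Qed.

Lemma gn_ord g (i : 'I_q) : gn g i = g i.
Proof. by rewrite /gn valK. Qed.

Lemma xdiv (x : 'I_n) : x %/ BB < q.
Proof. by rewrite ltn_divLR ?BB_gt0 // -hn. Qed.

Lemma in_setg g (x : 'I_n) : (x \in setg g) = (x %% BB < ss (g (Ordinal (xdiv x)))).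
Proof. by rewrite inE -(gn_ord g (Ordinal (xdiv x))). Qed.

Definition mx (g h : {ffun 'I_q -> 'I_q}) : {ffun 'I_q -> 'I_q} :=
  [ffun i => if g i <= h i then h i else g i].

Lemma setgU g h : setg g :|: setg h = setg (mx g h).
Proof.
apply/setP=> x; rewrite in_setU !in_setg ffunE.
move: (g _) (h _) (x %% BB) => a b y.
case: (leqP a b) => ab.
  have := ss_le ab; move=> hab; apply/idP/idP; [case/orP|]; lia.
have := ss_le (ltnW ab); move=> hab; apply/idP/idP; [case/orP|]; lia.
Qed.

Lemma fam_uc A B : A \in fam -> B \in fam -> A :|: B \in fam.
Proof.
move=> /imsetP[g _ ->] /imsetP[h _ ->]; rewrite setgU.
by apply/imsetP; exists (mx g h).
Qed.

Lemma ord_of_block (i : 'I_q) (y : nat) : y < BB -> i * BB + y < n.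
Proof. move=> yB; rewrite hn; have := ltn_ord i; nia. Qed.

Lemma block_div (i y : nat) : y < BB -> (i * BB + y) %/ BB = i.
Proof. by move=> yB; rewrite divnMDl ?BB_gt0 // divn_small // addn0. Qed.

Lemma block_mod (i y : nat) : y < BB -> (i * BB + y) %% BB = y.
Proof. by move=> yB; rewrite modnMDl modn_small. Qed.

Lemma setg_inj : injective setg.
Proof.
have key g h i : setg g = setg h -> g i <= h i.
  move=> e; rewrite leqNgt; apply/negP => hg.
  have yB : ss (h i) < BB by apply: ss_ltBB; apply: ltnW.
  pose x := Ordinal (ord_of_block i yB).
  have ex : Ordinal (xdiv x) = i by apply: val_inj; rewrite /= block_div.
  have : x \in setg g by rewrite in_setg ex /= block_mod // ss_lt.
  by rewrite e in_setg ex /= block_mod // ltnn.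
move=> g h e; apply/ffunP => i; apply/val_inj/eqP; rewrite eqn_leq.
by rewrite key // key.
Qed.

Lemma card_fam : #|fam| = q ^ q.
Proof. by rewrite card_imset; [rewrite cardsT card_ffun card_ord | apply: setg_inj]. Qed.

Lemma card_fam_prod (F : 'I_q -> pred 'I_q) :
  #|[set g : {ffun 'I_q -> 'I_q} | [forall i, g i \in F i]]| = \prod_(i : 'I_q) #|F i|.
Proof.
transitivity #|(family F : simpl_pred {dffun forall i : 'I_q, 'I_q})|.
  by apply: eq_card => g; rewrite inE; apply/forallP/familyP.
by rewrite card_family foldrE big_map big_enum.
Qed.

Lemma card_coord (i0 : 'I_q) (P : {set 'I_q}) :
  #|[set g : {ffun 'I_q -> 'I_q} | g i0 \in P]| = #|P| * q ^ (q - 1).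
Proof.
pose F := fun i : 'I_q => if i == i0 then [pred y | y \in P] else predT.
have -> : [set g : {ffun 'I_q -> 'I_q} | g i0 \in P] = [set g : {ffun 'I_q -> 'I_q} | [forall i, g i \in F i]].
  apply/setP=> g; rewrite !inE; apply/idP/forallP.
    by move=> Pg i; rewrite /F; case: eqP => [->|] //.
  by move=> /(_ i0); rewrite /F eqxx.
rewrite card_fam_prod (bigD1 i0) //= /F eqxx; congr (_ * _); last first.
rewrite (eq_bigr (fun _ => q)); last by move=> i /negbTE ->; rewrite cardT size_enum_ord.
by rewrite prod_nat_const cardC1 card_ord subn1.
Qed.

Lemma abund_set (x : 'I_n) :
  [set A in fam | x \in A] = setg @: [set g | x \in setg g].
Proof.
apply/setP=> A; rewrite !inE; apply/andP/imsetP.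
  by case=> /imsetP[g _ ->] xg; exists g => //; rewrite inE.
case=> g; rewrite inE => xg ->; split => //; apply/imsetP; exists g => //.
Qed.

Lemma card_abund (x : 'I_n) :
  #|[set A in fam | x \in A]| =
  #|[set y : 'I_q | x %% BB < ss y]| * q ^ (q - 1).
Proof.
rewrite abund_set card_imset; last exact: setg_inj.
rewrite -(card_coord (Ordinal (xdiv x))); apply: eq_card => g; rewrite !inE.
rewrite -[x %/ BB]/(nat_of_ord (Ordinal (xdiv x))) gn_ord.
by [].
Qed.

Lemma abund_lb g (x : 'I_n) : x \in setg g ->
  q ^ (q - 1) <= #|[set A in fam | x \in A]|.
Proof.
move=> xg; rewrite card_abund -{1}(mul1n (q ^ _)) leq_mul2r.
apply/orP; right; apply/card_gt0P; exists (g (Ordinal (xdiv x))).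
by rewrite inE -in_setg.
Qed.

Lemma abund_ub (J : nat) (x : 'I_n) : 0 < J -> J <= q -> ss J.-1 <= x %% BB ->
  #|[set A in fam | x \in A]| <= (q - J) * q ^ (q - 1).
Proof.
move=> J0 Jq lo; rewrite card_abund leq_mul2r; apply/orP; right.
rewrite -(sum_ge Jq) -card_ord_pred; apply: subset_leq_card.
apply/subsetP=> y; rewrite !inE => h.
have : ss J.-1 < ss y by lia.
rewrite ss_lt; lia.
Qed.

Lemma card_block (P : nat -> nat -> bool) :
  #|[set x : 'I_n | P (x %/ BB) (x %% BB)]| =
  \sum_(0 <= i < q) \sum_(0 <= y < BB) P i y.
Proof.
rewrite (@card_ord_pred n (fun x => P (x %/ BB) (x %% BB))) hn sum_blocks.
apply: eq_bigr => i _; apply: eq_big_nat => y /andP[_ yB].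
by rewrite block_div // block_mod.
Qed.

Lemma size_setg (g : {ffun 'I_q -> 'I_q}) (i0 : 'I_q) : ss (g i0) <= #|setg g|.
Proof.
apply: (@leq_trans #|[set x : 'I_n | (x %/ BB == i0) && (x %% BB < ss (g i0))]|).
  rewrite (card_block (fun i y => (i == i0) && (y < ss (g i0)))).
  have -> : \sum_(0 <= i < q) \sum_(0 <= y < BB) ((i == i0) && (y < ss (g i0)))
         = \sum_(0 <= i < q) (i == i0) * ss (g i0).
    apply: eq_bigr => i _; case: (i == i0) => /=; last by rewrite big1_eq.
    by rewrite mul1n sum_lt // ltnW // ss_ltBB // ltnW.
  rewrite big_mkord (bigD1 i0) //= eqxx mul1n big1 ?addn0 //.
  move=> i ne; rewrite (_ : (i == i0 :> nat) = false) //.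
  by apply/negbTE; rewrite (inj_eq val_inj).
apply: subset_leq_card; apply/subsetP => x; rewrite !inE => /andP[/eqP e h].
have e2 : Ordinal (xdiv x) = i0 by apply: val_inj.
by rewrite -[x %/ BB]/(nat_of_ord (Ordinal (xdiv x))) gn_ord e2.
Qed.

Lemma low_card (g : {ffun 'I_q -> 'I_q}) (s' : nat) : s' <= BB ->
  #|[set x in setg g | x %% BB < s']| <= q * s'.
Proof.
move=> sB.
apply: (@leq_trans #|[set x : 'I_n | (x %/ BB == x %/ BB) && (x %% BB < s')]|).
  by apply: subset_leq_card; apply/subsetP => x; rewrite !inE eqxx => /andP[].
rewrite (card_block (fun i y => (i == i) && (y < s'))).
rewrite (eq_bigr (fun _ => s')); first by rewrite sum_nat_const_nat subn0 mulnC.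
move=> i _; rewrite -{2}(sum_lt sB); apply: eq_bigr => y _; by rewrite eqxx.
Qed.

Definition Jm (g : {ffun 'I_q -> 'I_q}) := \max_(i : 'I_q) (g i : nat).

Lemma Jm_ex (g : {ffun 'I_q -> 'I_q}) : exists i0, Jm g = g i0.
Proof.
have q0 : 0 < #|'I_q| by rewrite card_ord; lia.
by case: (eq_bigmax (fun i : 'I_q => (g i : nat)) q0) => i0 e; exists i0.
Qed.

Lemma Jm_lt (g : {ffun 'I_q -> 'I_q}) : Jm g < q.
Proof. by case: (Jm_ex g) => i0 ->. Qed.

Lemma Jm_ge (g : {ffun 'I_q -> 'I_q}) (i : 'I_q) : g i <= Jm g.
Proof. by rewrite /Jm; apply: (@leq_bigmax _ (fun i : 'I_q => (g i : nat)) i). Qed.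

Lemma setg_Jm (g : {ffun 'I_q -> 'I_q}) (x : 'I_n) : x \in setg g -> x %% BB < ss (Jm g).
Proof. by rewrite in_setg => h; apply: (leq_trans h); apply: ss_le; apply: Jm_ge. Qed.

Lemma size_setgJ (g : {ffun 'I_q -> 'I_q}) : ss (Jm g) <= #|setg g|.
Proof. by case: (Jm_ex g) => i0 ->; apply: size_setg. Qed.

Lemma Jm_pos (g : {ffun 'I_q -> 'I_q}) : setg g != set0 -> 0 < Jm g.
Proof.
case/set0Pn => x /setg_Jm; case: (Jm g) => //.
Qed.

Lemma card_le_t (t : nat) : t < q -> #|[set y : 'I_q | y <= t]| = t.+1.
Proof.
by move=> tq; rewrite (@card_ord_pred q (fun y => y <= t)); apply: (sum_lt tq).
Qed.

Lemma sum_qJ : \sum_(g : {ffun 'I_q -> 'I_q}) (q - Jm g) = \sum_(t : 'I_q) t.+1 ^ q.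
Proof.
have e g : q - Jm g = \sum_(t : 'I_q) (Jm g <= t).
  rewrite -(sum_ge (ltnW (Jm_lt g))) -(big_mkord xpredT (fun t => (Jm g <= t : nat))).
  by [].
rewrite (eq_bigr _ (fun g _ => e g)) exchange_big /=.
apply: eq_bigr => t _.
rewrite -big_mkcond /= sum1dep_card.
have -> : [set g : {ffun 'I_q -> 'I_q} | Jm g <= t] = [set g : {ffun 'I_q -> 'I_q} | [forall i, g i \in [pred y : 'I_q | y <= t]]].
  apply/setP => g; rewrite !inE; apply/idP/forallP.
    by move=> h i; rewrite inE; apply: leq_trans h; apply: Jm_ge.
  by move=> h; apply/bigmax_leqP => i _; have := h i; rewrite inE.
rewrite card_fam_prod (eq_bigr (fun _ => t.+1)) ?prod_nat_const ?card_ord //.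
by move=> i _; rewrite -(card_le_t (ltn_ord t)); apply: eq_card => y; rewrite !inE.
Qed.

Lemma ss_step J : 0 < J -> q * q * ss J.-1 <= ss J.
Proof.
case: J => // J _; rewrite /ss expnS -/QQ /=.
have : 0 < QQ ^ J by rewrite expn_gt0; have := QQ_gt1; lia.
rewrite /QQ; nia.
Qed.

Definition z0 : 'I_q := Ordinal (ltnW hq).
Definition g0 : {ffun 'I_q -> 'I_q} := [ffun _ => z0].

Lemma setg0 : setg g0 = set0.
Proof. by apply/setP => x; rewrite in_setg ffunE inE. Qed.

Lemma set0_fam : set0 \in fam.
Proof. by rewrite -setg0; apply/imsetP; exists g0. Qed.

Lemma card_famD : #|fam :\ set0| = (q ^ q).-1.
Proof. by rewrite -card_fam (cardsD1 set0 fam) set0_fam. Qed.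

Lemma famD_im : fam :\ set0 = setg @: [set g | setg g != set0].
Proof.
apply/setP => A; rewrite !inE; apply/andP/imsetP.
  by case=> ne /imsetP[g _ e]; exists g => //; rewrite inE -e.
by case=> g; rewrite inE => ne ->; split => //; apply/imsetP; exists g.
Qed.

End Fam.

Import Order.TTheory GRing.Theory Num.Theory.
Local Open Scope ring_scope.

Section Real.
Variable R : realFieldType.
Variables (q n : nat).
Hypothesis hq : (1 < q)%N.
Hypothesis hn : n = (q * BB q)%N.

Lemma qpos : 0 < q%:R :> R. Proof. by rewrite ltr0n; lia. Qed.
Lemma mpos : 0 < (q ^ q)%:R :> R. Proof. by rewrite ltr0n expn_gt0; lia. Qed.
Lemma qq_split : (q ^ q = q * q ^ (q - 1))%N.
Proof. by case: q hq => // p _; rewrite expnS subSS subn0. Qed.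

Lemma ab_lb (g : {ffun 'I_q -> 'I_q}) (x : 'I_n) : x \in setg n g -> 1 / q%:R <= abundance R (fam q n) x.
Proof.
move=> xg; rewrite /abundance (card_fam hq hn).
rewrite ler_pdivlMr ?mpos // qq_split natrM mul1r mulrA mulVf ?mul1r ?ler_nat.
  exact: (abund_lb hq hn xg).
by rewrite pnatr_eq0; lia.
Qed.

Lemma ab_le1 (x : 'I_n) : abundance R (fam q n) x <= 1.
Proof.
rewrite /abundance ler_pdivrMr; last by rewrite (card_fam hq hn) mpos.
rewrite mul1r ler_nat; apply: subset_leq_card; apply/subsetP => A; rewrite inE.
by case/andP.
Qed.

Lemma ab_ub (J : nat) (x : 'I_n) : (0 < J)%N -> (J <= q)%N -> (ss q J.-1 <= x %% BB q)%N ->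
  abundance R (fam q n) x <= (q - J)%:R / q%:R.
Proof.
move=> J0 Jq lo; rewrite /abundance (card_fam hq hn).
rewrite ler_pdivrMr ?mpos // mulrAC ler_pdivlMr ?qpos // -!natrM ler_nat.
rewrite qq_split mulnCA [X in (X <= _)%N]mulnC leq_mul2l (abund_ub hq hn J0 Jq lo) orbT //.
Qed.

Lemma avg_lb (g : {ffun 'I_q -> 'I_q}) : setg n g != set0 ->
  1 / q%:R <= (#|setg n g|%:R)^-1 * \sum_(x in setg n g) abundance R (fam q n) x.
Proof.
move=> ne; have a0 : (0 < #|setg n g|)%N by rewrite card_gt0.
have ap : 0 < #|setg n g|%:R :> R by rewrite ltr0n.
rewrite ler_pdivlMl //.
apply: (@le_trans _ _ (\sum_(x in setg n g) (1 / q%:R : R))).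
  by rewrite sumr_const mulr_natl.
by apply: ler_sum => x xg; apply: ab_lb xg.
Qed.

Lemma avg_ub (g : {ffun 'I_q -> 'I_q}) : setg n g != set0 ->
  (#|setg n g|%:R)^-1 * \sum_(x in setg n g) abundance R (fam q n) x
  <= (1 + (q - Jm g))%:R / q%:R.
Proof.
move=> ne; have a0 : (0 < #|setg n g|)%N by rewrite card_gt0.
have ap : 0 < #|setg n g|%:R :> R by rewrite ltr0n.
have J0 := Jm_pos hq hn ne.
have Jq := Jm_lt hq hn g.
set A := setg n g; set J := Jm g; set a := #|A|.
set L := #|[set x in A | (x %% BB q < ss q J.-1)%N]|.
have hL : (L <= q * ss q J.-1)%N.
  by apply: low_card => //; apply: ltnW; apply: ss_ltBB => //; lia.
have hLa : (q * L <= a)%N.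
  apply: (leq_trans (leq_mul (leqnn q) hL)); rewrite mulnA.
  exact: (leq_trans (ss_step hq hn J0) (size_setgJ hq hn g)).
have hs : \sum_(x in A) abundance R (fam q n) x <=
          L%:R + a%:R * ((q - J)%:R / q%:R).
  apply: (@le_trans _ _ (\sum_(x in A) (((x %% BB q < ss q J.-1)%N : nat)%:R
                                        + (q - J)%:R / q%:R))).
    apply: ler_sum => x xA; case: ltnP => lo /=.
      have : 0 <= (q - J)%:R / q%:R :> R by rewrite divr_ge0 ?ler0n.
      by have := ab_le1 x; lra.
    by rewrite add0r; apply: ab_ub => //; lia.
  rewrite big_split /= sumr_const -natr_sum mulr_natl; apply: lerD => //.
  rewrite ler_nat -big_mkcondr /= sum1dep_card //.
  by rewrite mulr_natl.
rewrite ler_pdivrMl //; apply: (le_trans hs).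
rewrite natrD mulrDl mulrDr lerD2r mul1r ler_pdivlMr ?qpos // -natrM ler_nat mulnC.
exact: hLa.
Qed.


Lemma m_ge2 : (2 <= q ^ q)%N.
Proof. apply: (leq_trans hq); rewrite -{1}(expn1 q) leq_pexp2l //; lia. Qed.

Lemma kpos : 0 < #|fam q n :\ set0|%:R :> R.
Proof. by rewrite (card_famD hq hn) ltr0n; have := m_ge2; lia. Qed.

Lemma AOD_lb : 1 / q%:R <= AOD R (fam q n).
Proof.
rewrite /AOD ler_pdivlMl ?kpos //.
apply: (@le_trans _ _ (\sum_(A in fam q n :\ set0) (1 / q%:R : R))).
  by rewrite sumr_const mulr_natl.
apply: ler_sum => A; rewrite !inE => /andP[ne /imsetP[g _ e]].
by rewrite e; apply: avg_lb; rewrite -e.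
Qed.

Lemma sum_all_J : (\sum_(g : {ffun 'I_q -> 'I_q}) (1 + (q - Jm g)) <= 3 * q ^ q)%N.
Proof.
rewrite big_split /= sum1_card card_ffun !card_ord (sum_qJ hq hn).
have := sum_pow_bound q; lia.
Qed.

Lemma AOD_ub : AOD R (fam q n) <= 6 / q%:R.
Proof.
rewrite /AOD ler_pdivrMl ?kpos // famD_im big_imset /=; last first.
  by move=> g h _ _; apply: (setg_inj hq hn).
apply: (@le_trans _ _ (\sum_(g in [set g : {ffun 'I_q -> 'I_q} | setg n g != set0])
                       ((1 + (q - Jm g))%:R / q%:R : R))).
  by apply: ler_sum => g; rewrite inE => ne; apply: avg_ub.
apply: (@le_trans _ _ (\sum_(g : {ffun 'I_q -> 'I_q}) ((1 + (q - Jm g))%:R / q%:R : R))).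
  rewrite big_mkcond /=; apply: ler_sum => g _; case: ifP => // _.
  by rewrite divr_ge0 ?ler0n.
rewrite -mulr_suml -natr_sum.
rewrite -famD_im (card_famD hq hn) mulrA ler_pdivrMr ?qpos // mulrAC.
rewrite mulfK; last by rewrite pnatr_eq0; lia.
rewrite -natrM ler_nat; apply: (leq_trans sum_all_J); have := m_ge2; lia.
Qed.

End Real.

Lemma log2_pow (R : realType) (N : nat) : log2 ((2 ^ N)%:R : R) = N%:R.
Proof.
rewrite /log2 natrX lnXn ?ltr0n // -[X in X / _]mulr_natr mulrAC divff ?mul1r //.
by rewrite gt_eqF // ln_gt0 // ltr1n.
Qed.

Definition qq (c : nat) : nat := 2 ^ (2 ^ c).
Definition NN (c : nat) : nat := qq c * BB (qq c).
Definition cpar (n : nat) : nat := find (fun c => NN c == n) (iota 0 n.+1).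

Lemma qq_gt1 c : (1 < qq c)%N.
Proof. by rewrite /qq -{1}(expn0 2) ltn_exp2l // expn_gt0. Qed.

Lemma NN_ge c : (c < NN c)%N.
Proof.
rewrite /NN; apply: (@leq_trans (qq c)).
  rewrite /qq; apply: (leq_trans (ltn_expl c (ltnSn 1))).
  by apply: ltnW; apply: ltn_expl.
have := BB_gt0 (n := NN c) (qq_gt1 c) erefl; rewrite /BB => h; rewrite -{1}(muln1 (qq c)) leq_mul2l h orbT. by [].
Qed.

Lemma NN_cpar c : NN (cpar (NN c)) = NN c.
Proof.
have hs : has (fun c' => NN c' == NN c) (iota 0 (NN c).+1).
  by apply/hasP; exists c; rewrite ?eqxx // mem_iota /= add0n ltnS ltnW // NN_ge.
have := nth_find 0 hs; rewrite nth_iota ?add0n; first by move/eqP.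
by have := hs; rewrite has_find size_iota.
Qed.

Lemma ratio_bounds (R : realFieldType) (a b Q : R) : 0 < a -> 0 < Q -> 0 <= b -> b <= a ->
  (1/2) * ((b + a) / (a * Q)) <= 1 / Q /\ 6 / Q <= 6 * ((b + a) / (a * Q)).
Proof.
move=> a0 Q0 b0 ba.
have e : (b + a) / (a * Q) = (b + a) / a * Q^-1 by rewrite invfM mulrA.
have t1 : 1 <= (b + a) / a by rewrite ler_pdivlMr // mul1r; lra.
have t2 : (b + a) / a <= 2 by rewrite ler_pdivrMr //; lra.
have u0 : 0 < Q^-1 by rewrite invr_gt0.
rewrite e !mul1r; move: t1 t2 u0; set t := (b + a) / a; set u := Q^-1.
move=> t1 t2 u0; split; nra.
Qed.

Theorem theorem2 (R : realType) :
  exists (c C : R), 0 < c /\ 0 < C /\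
  exists (S : pred nat) (F : forall n : nat, {set {set 'I_n}}),
    (forall n, S n -> 0 < n)%N /\
    (forall N : nat, exists n, S n /\ (N <= n)%N) /\
    (forall n, S n ->
       [/\ union_closed (F n), F n != set0 & F n != [set set0]]) /\
    (forall M : nat, exists N : nat, forall n, S n -> (N <= n)%N -> (M <= #|F n|)%N) /\
    (forall n, S n ->
       c * (log2 (log2 (#|F n|%:R : R)) / log2 (#|F n|%:R : R)) <= AOD R (F n) /\
       AOD R (F n) <= C * (log2 (log2 (#|F n|%:R : R)) / log2 (#|F n|%:R : R))).
Proof.
exists (1/2), 6; split; first by rewrite divr_gt0 ?ltr0n.
split; first by rewrite ltr0n.
exists (fun n => n == NN (cpar n)), (fun n => fam (qq (cpar n)) n).
split.
  move=> n /eqP e; rewrite e; exact: (leq_ltn_trans (leq0n _) (NN_ge _)).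
split.
  move=> N; exists (NN N); split; first by rewrite /= NN_cpar.
  exact: ltnW (NN_ge N).
split.
  move=> n /eqP e; have hq := qq_gt1 (cpar n).
  have hn : n = (qq (cpar n) * BB (qq (cpar n)))%N by exact: e.
  split.
  - by move=> A B; apply: fam_uc.
  - by apply/set0Pn; exists set0; apply: set0_fam.
  - apply/eqP => h; have := card_fam hq hn; rewrite h cards1.
    have := m_ge2 hq hn; lia.
split.
  move=> M; exists (M ^ 3)%N => n /eqP e le.
  have hq := qq_gt1 (cpar n).
  have hn : n = (qq (cpar n) * BB (qq (cpar n)))%N by exact: e.
  rewrite (card_fam hq hn) -(@leq_exp2r _ _ 3) //; apply: (leq_trans le).
  move: (qq (cpar n)) hq hn => q hq ->; rewrite /BB /QQ expnMn.
  have : (q <= q ^ q)%N by rewrite -{1}(expn1 q) leq_pexp2l //; lia.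
  move=> h.
rewrite (_ : (q ^ q) ^ 3 = q ^ q * (q ^ q * q ^ q))%N; first by rewrite leq_mul2r h orbT.
by rewrite !expnS expn0 muln1.
move=> n /eqP e.
have hq := qq_gt1 (cpar n).
have hn : n = (qq (cpar n) * BB (qq (cpar n)))%N by exact: e.
have lb := AOD_lb R hq hn; have ub := AOD_ub R hq hn.
rewrite (card_fam hq hn).
set c := cpar n in hq hn lb ub *.
have e1 : (qq c ^ qq c = 2 ^ (2 ^ c * qq c))%N by rewrite /qq expnM.
have e2 : (2 ^ c * qq c = 2 ^ (c + 2 ^ c))%N by rewrite /qq expnD.
rewrite e1 log2_pow e2 log2_pow -e2 natrM natrD.
have := @ratio_bounds R (2 ^ c)%:R c%:R (qq c)%:R.
rewrite ltr0n expn_gt0 /= ltr0n ler0n ler_nat (ltnW (ltn_expl c (ltnSn 1))).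
move=> /(_ isT ltac:(by apply: ltnW; exact: hq) isT isT) [h1 h2].
split; first exact: (le_trans h1 lb).
exact: (le_trans ub h2).
Qed.
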